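(* Let $\mathcal{A},\mathcal{B},\mathcal{C}$ be finite-dimensional complex Hilbert spaces with $\dim\mathcal{C}\geq\dim(\mathcal{A}\otimes\mathcal{B})$. Let $L$ be a subunitary operator on $\mathcal{A}\otimes\mathcal{B}$ (i.e. $\|L\ket{\varphi}\|\leq\|\ket{\varphi}\|$ for all $\ket{\varphi}$). Let $\ket{\xi}\neq 0$ and $\ket{\tau}$ be vectors in $\mathcal{A}\otimes\mathcal{B}\otimes\mathcal{C}$, and let $T\geq 1$ be an integer. Then it is possible to transform $\ket{\xi}\mapsto\ket{\tau}$ in $T$ timesteps (in the sense defined in the context) if and only if there exist positive semidefinite operators $\pi^0,\pi^1,\dots,\pi^{T-1}$ on $\mathcal{A}\otimes\mathcal{B}$ such that $\mathrm{tr}_{\mathcal{B}}\pi^{j+1}=\mathrm{tr}_{\mathcal{B}}\left(L\pi^jL^\dagger\right)$ for all $0\leq j\leq T-2$, $\mathrm{tr}_{\mathcal{B}\mathcal{C}}\ket{\xi}\bra{\xi}=\mathrm{tr}_{\mathcal{B}}\pi^0$, and $\mathrm{tr}_{\mathcal{B}\mathcal{C}}\ket{\tau}\bra{\tau}=\mathrm{tr}_{\mathcal{B}}\left(L\pi^{T-1}L^\dagger\right)$.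
   Context: A $T$-timestep algorithm consists of a choice of unitaries $U_0,U_1,\dots,U_T$ acting on $\mathcal{B}\otimes\mathcal{C}$; it applies the operator $E=(I_{\mathcal{A}}\otimes U_T)(L\otimes I_{\mathcal{C}})(I_{\mathcal{A}}\otimes U_{T-1})(L\otimes I_{\mathcal{C}})\cdots(L\otimes I_{\mathcal{C}})(I_{\mathcal{A}}\otimes U_0)$ (i.e. $L$ is applied exactly $T$ times on $\mathcal{A}\otimes\mathcal{B}$, interleaved with arbitrary unitaries on $\mathcal{B}\otimes\mathcal{C}$; the algorithm never acts directly on $\mathcal{A}$ otherwise). ''Transform $\ket{\xi}\mapsto\ket{\tau}$ in $T$ timesteps'' means there is such an algorithm with $E\ket{\xi}=\ket{\tau}$. States need not be normalized. $\mathrm{tr}_{\mathcal{B}}$, $\mathrm{tr}_{\mathcal{B}\mathcal{C}}$ denote partial traces over the indicated factors. *)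

(* Defs.v *)
From HB Require Import structures.
From mathcomp Require Import all_boot all_order all_algebra.
From mathcomp Require Import complex mxtens.
From mathcomp Require Import reals.
From mathcomp Require Export spectral.
Set Implicit Arguments. Unset Strict Implicit. Unset Printing Implicit Defensive.
Import Order.TTheory GRing.Theory Num.Theory Num.Def.
Local Open Scope ring_scope.
Local Open Scope complex_scope.

Section QDefs.
Variable R : realType.
Local Notation C := (R[i])%C.

Definition dag {m n} (M : 'M[C]_(m, n)) : 'M[C]_(n, m) := map_mx Num.conj (M ^T).

Definition vnorm {n} (v : 'cV[C]_n) : C := sqrtC (\sum_i `|v i 0| ^+ 2).

Definition subunitary {n} (L : 'M[C]_n) : Prop :=
  forall v : 'cV[C]_n, vnorm (L *m v) <= vnorm v.

Definition unitary {n} (U : 'M[C]_n) : Prop := U \is unitarymx.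

Definition psd {n} (P : 'M[C]_n) : Prop :=
  dag P = P /\ forall v : 'cV[C]_n, 0 <= (dag v *m P *m v) 0 0.

(* Partial trace over the second tensor factor: for M on X (x) Y
   (index (i,k) |-> i * dim Y + k, as in mxtens_index), tr_Y M on X. *)
Definition ptrace2 {m n} (M : 'M[C]_(m * n)) : 'M[C]_m :=
  \matrix_(i, j) \sum_(k < n) M (mxtens_index (i, k)) (mxtens_index (j, k)).

Definition ketbra {n} (x : 'cV[C]_n) : 'M[C]_n := x *m dag x.

Section Alg.
Variables a b c : nat.

Definition trB (M : 'M[C]_(a * b)) : 'M[C]_a := ptrace2 M.
(* tr_{BC} on A (x) B (x) C, where A (x) B (x) C is indexed by 'I_(a*b*c)
   (= (A (x) B) (x) C), reassociated as A (x) (B (x) C). *)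
Definition trBC (M : 'M[C]_(a * b * c)) : 'M[C]_a :=
  ptrace2 (castmx (esym (mulnA a b c), esym (mulnA a b c)) M : 'M[C]_(a * (b * c))).

Definition idA_tens (U : 'M[C]_(b * c)) : 'M[C]_(a * b * c) :=
  castmx (mulnA a b c, mulnA a b c) ((1%:M : 'M[C]_a) *t U).
Definition tens_idC (L : 'M[C]_(a * b)) : 'M[C]_(a * b * c) :=
  L *t (1%:M : 'M[C]_c).

Fixpoint alg_op (L : 'M[C]_(a * b)) (U : nat -> 'M[C]_(b * c)) (k : nat)
  : 'M[C]_(a * b * c) :=
  match k with
  | 0 => idA_tens (U 0%N)
  | k'.+1 => idA_tens (U k) *m (tens_idC L *m alg_op L U k')
  end.

Definition transformable (L : 'M[C]_(a * b)) (T : nat)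
  (xi tau : 'cV[C]_(a * b * c)) : Prop :=
  exists U : nat -> 'M[C]_(b * c),
    (forall j, (j <= T)%N -> unitary (U j)) /\ alg_op L U T *m xi = tau.
End Alg.
End QDefs.

(* Main.v *)
Require Import Defs.
From HB Require Import structures.
From mathcomp Require Import all_boot all_order all_algebra.
From mathcomp Require Import complex mxtens reals sesquilinear spectral.
Import Order.TTheory GRing.Theory Num.Theory Num.Def.
Set Implicit Arguments. Unset Strict Implicit. Unset Printing Implicit Defensive.
Local Open Scope ring_scope.
Local Open Scope sesquilinear_scope.

Section Freedom.
Variable C : numClosedFieldType.

Local Notation "B ^!" :=
  (orthomx conjC (mx_of_hermitian (hermitian1mx _)) B) : matrix_set_scope.
Local Notation "A '_|_ B" := (A%MS <= B^!)%MS : bool_scope.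

Lemma trC_mul m n p (A : 'M[C]_(m,n)) (B : 'M[C]_(n,p)) :
  (A *m B)^t* = B^t* *m A^t*.
Proof. by rewrite trmx_mul map_mxM. Qed.

Lemma mxCC0 m n (A : 'M[C]_(m,n)) : A *m A^t* = 0 -> A = 0.
Proof.
move=> H; apply/matrixP => i j; rewrite mxE.
have S : \sum_k A i k * (A i k)^* = 0.
  transitivity ((A *m A^t*) i i); last by rewrite H mxE.
  by rewrite !mxE; apply: eq_bigr => k _; rewrite !mxE.
have := @psumr_eq0P _ _ _ _ (fun k _ => mul_conjC_ge0 (A i k)) S j isT.
by move/eqP; rewrite mul_conjC_eq0 => /eqP.
Qed.

Lemma cast_unitary m m' n (e : m = m') (A : 'M[C]_(m,n)) :
  A \is unitarymx -> castmx (e, erefl n) A \is unitarymx.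
Proof. by case: m' / e; rewrite castmx_id. Qed.

Lemma compl_exists r d (E : 'M[C]_(r,d)) : E \is unitarymx ->
  exists F : 'M[C]_(d - r, d), F \is unitarymx /\ E *m F^t* = 0.
Proof.
move=> Eu; have rkE := mxrank_unitary Eu.
have e : \rank E^!%MS = (d - r)%N by rewrite rank_ortho rkE.
set F0 := schmidt (row_base E^!%MS).
have F0u : F0 \is unitarymx by apply: schmidt_unitarymx; apply: rank_leq_col.
have F0o : E *m F0^t* = 0.
  apply/orthomx1P; rewrite orthomx_sym.
  by rewrite eqmx_schmidt_free ?row_base_free // eq_row_base submx_refl.
exists (castmx (e, erefl d) F0); split; first exact: cast_unitary.
suff H : forall s (e' : \rank E^!%MS = s), E *m (castmx (e', erefl d) F0)^t* = 0.
  exact: H.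
by move=> s e'; case: s / e'; rewrite castmx_id.
Qed.

Lemma extend r d (E G : 'M[C]_(r,d)) : E \is unitarymx -> G \is unitarymx ->
  exists W : 'M[C]_d, W \is unitarymx /\ E *m W = G.
Proof.
move=> Eu Gu.
have rle : (r <= d)%N by rewrite -(mxrank_unitary Eu) rank_leq_col.
have [FE [FEu FEo]] := compl_exists Eu.
have [FG [FGu FGo]] := compl_exists Gu.
have OmU : forall (A : 'M[C]_(r,d)) (F : 'M[C]_(d - r, d)),
    A \is unitarymx -> F \is unitarymx -> A *m F^t* = 0 ->
    col_mx A F \is unitarymx.
  move=> A F Au Fu AF; apply/unitarymxP.
  rewrite tr_col_mx map_row_mx mul_col_row (unitarymxP Au) (unitarymxP Fu) AF.
  have -> : F *m A^t* = 0 by rewrite -[F]trmxCK -trC_mul AF trmx0 map_mx0.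
  by rewrite -scalar_mx_block.
have OEu := OmU _ _ Eu FEu FEo.
have OGu := OmU _ _ Gu FGu FGo.
exists ((col_mx E FE)^t* *m col_mx G FG); split.
  apply/unitarymxP; rewrite trC_mul trmxCK mulmxA -[_ *m col_mx G FG *m _]mulmxA.
  rewrite (unitarymxP OGu) mulmx1.
  have := mulmxKtV (1%:M : 'M[C]_d) OEu (subnKC rle).
  by rewrite mul1mx.
rewrite mulmxA tr_col_mx map_row_mx mul_mx_row (unitarymxP Eu) FEo.
by rewrite mul_row_col mul1mx mul0mx addr0.
Qed.

Lemma freedom a d (X Y : 'M[C]_(a,d)) : X *m X^t* = Y *m Y^t* ->
  exists W : 'M[C]_d, W \is unitarymx /\ X *m W = Y.
Proof.
move=> XY.
have kern : forall k (Z : 'M[C]_(k,a)), Z *m X = 0 -> Z *m Y = 0.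
  move=> k Z ZX; apply: mxCC0.
  by rewrite trC_mul mulmxA -[Z *m Y *m _]mulmxA -XY mulmxA ZX !mul0mx.
set E := schmidt (row_base X).
have Eu : E \is unitarymx by apply: schmidt_unitarymx; apply: rank_leq_col.
have EX : (E :=: X)%MS :=
  eqmx_trans (eqmx_schmidt_free (row_base_free X)) (eq_row_base X).
have [K hXK] : exists K, K *m E = X.
  by exists (X *m pinvmx E); rewrite mulmxKpV // EX submx_refl.
have [Lm hE] : exists Lm, Lm *m X = E.
  by exists (E *m pinvmx X); rewrite mulmxKpV // EX submx_refl.
have LK : Lm *m K = 1%:M.
  rewrite -[Lm *m K]mulmx1 -(unitarymxP Eu) mulmxA -[Lm *m K *m E]mulmxA hXK hE.
  by [].
have Gu : Lm *m Y \is unitarymx.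
  apply/unitarymxP; rewrite trC_mul mulmxA -[Lm *m Y *m _]mulmxA -XY.
  by rewrite mulmxA -[Lm *m X *m X^t* *m _]mulmxA -trC_mul hE (unitarymxP Eu).
have KG : K *m (Lm *m Y) = Y.
  have := kern _ (K *m Lm - 1%:M).
  rewrite !mulmxBl !mul1mx -!mulmxA hE hXK subrr => /(_ erefl) /eqP.
  by rewrite subr_eq0 => /eqP.
have [W [Wu EW]] := extend Eu Gu.
exists W; split => //.
have -> : X *m W = K *m (E *m W) by rewrite mulmxA hXK.
by rewrite EW KG.
Qed.
Lemma psd_sqrt n (P : 'M[C]_n) : P^t* = P ->
  (forall v : 'cV[C]_n, 0 <= (v^t* *m P *m v) 0 0) ->
  exists M : 'M[C]_n, M *m M^t* = P.
Proof.
move=> Ph Pp.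
have Pn : P \is normalmx by apply/normalmxP; rewrite Ph.
have /orthomx_spectralP := Pn.
set S := spectralmx P; set sp := spectral_diag P => PE.
have Su : S \is unitarymx by apply: spectral_unitarymx.
rewrite invmx_unitary // in PE.
have sp0 : forall i, 0 <= sp 0 i.
  move=> i; have := Pp ((row i S)^t*); rewrite trmxCK.
  have -> : sp 0 i = (S *m P *m S^t*) i i.
    rewrite PE !mulmxA (unitarymxP Su) mul1mx -mulmxA (unitarymxP Su) mulmx1.
    by rewrite mxE eqxx mulr1n.
  suff -> : (S *m P *m S^t*) i i = (row i S *m P *m (row i S)^t*) 0 0 by [].
  rewrite !mxE; apply: eq_bigr => j _; rewrite !mxE; congr (_ * _).
  by apply: eq_bigr => k _; rewrite !mxE.
exists (S^t* *m diag_mx (map_mx sqrtC sp)).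
rewrite trC_mul trmxCK tr_diag_mx map_diag_mx mulmxA -[_ *m diag_mx _ *m diag_mx _]mulmxA.
rewrite mulmx_diag PE; congr (_ *m diag_mx _ *m _).
apply/rowP => j; rewrite !mxE /= geC0_conj ?sqrtC_ge0 //.
by rewrite -expr2 sqrtCK.
Qed.

End Freedom.
Lemma sum_tens (V : nmodType) m n (F : 'I_(m * n) -> V) :
  \sum_(l < m * n) F l = \sum_(i < m) \sum_(k < n) F (mxtens_index (i, k)).
Proof.
rewrite (reindex (@mxtens_index m n)) /=; last first.
  exists (@mxtens_unindex m n) => x _; [exact: mxtens_indexK | exact: mxtens_unindexK].
by rewrite pair_big; apply: eq_bigr => -[i k] _.
Qed.

Lemma sum_cast (V : nmodType) m n (e : m = n) (F : 'I_n -> V) :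
  \sum_(l < n) F l = \sum_(l < m) F (cast_ord e l).
Proof.
rewrite (reindex (cast_ord e)) //.
by exists (cast_ord (esym e)) => x _; [exact: cast_ordK | exact: cast_ordKV].
Qed.

Section Tens.
Variable R : realType.
Local Notation C := (R[i])%C.
Variables a b c : nat.

Definition Xm (v : 'cV[C]_(a * b * c)) : 'M[C]_(a, b * c) :=
  \matrix_(i, k) v (cast_ord (mulnA a b c) (mxtens_index (i, k))) 0.

Definition Zm (v : 'cV[C]_(a * b * c)) : 'M[C]_(a * b, c) :=
  \matrix_(i, z) v (mxtens_index (i, z)) 0.

Lemma trBC_Xm v : trBC (ketbra v) = Xm v *m (Xm v)^t*.
Proof.
apply/matrixP => i j; rewrite /trBC /ptrace2 /ketbra /dag !mxE.
apply: eq_bigr => k _; rewrite castmxE !mxE big_ord1 !mxE.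
by congr (v _ 0 * conjC (v _ 0)); apply: val_inj.
Qed.

Lemma ptrace_Zm v : @ptrace2 R (a * b) c (ketbra v) = Zm v *m (Zm v)^t*.
Proof.
apply/matrixP => i j; rewrite /ptrace2 /ketbra /dag !mxE.
by apply: eq_bigr => k _; rewrite !mxE big_ord1 !mxE.
Qed.

Lemma trBC_trB v : trBC (ketbra v) = trB (@ptrace2 R (a * b) c (ketbra v)).
Proof.
apply/matrixP => i j; rewrite /trBC /trB /ptrace2 !mxE sum_tens.
apply: eq_bigr => k _; rewrite mxE; apply: eq_bigr => z _.
rewrite castmxE /=; congr (ketbra v _ _); apply: val_inj => /=;
by rewrite mulnDl -mulnA addnA.
Qed.

Lemma Xm_idA U v : Xm (idA_tens a U *m v) = Xm v *m U^T.
Proof.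
apply/matrixP => i k; rewrite !mxE (sum_cast (mulnA a b c)) sum_tens.
rewrite (bigD1 i) //= [X in _ + X]big1 ?addr0; last first.
  move=> i' ni'; apply: big1 => k' _.
  rewrite /idA_tens castmxE !cast_ordK tensmxE mxE.
  by rewrite eq_sym (negbTE ni') mul0r mul0r.
apply: eq_bigr => k' _.
rewrite /idA_tens castmxE !cast_ordK tensmxE !mxE eqxx mul1r mulrC.
by [].
Qed.

Lemma Xm_inj v w : Xm v = Xm w -> v = w.
Proof.
move=> /matrixP H; apply/colP => l.
have -> : l = cast_ord (mulnA a b c)
   (mxtens_index (mxtens_unindex (cast_ord (esym (mulnA a b c)) l))).
  by rewrite mxtens_unindexK cast_ordKV.
case: (mxtens_unindex _) => i k.
by have := H i k; rewrite !mxE.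
Qed.

Lemma Zm_tens L v : Zm (tens_idC c L *m v) = L *m Zm v.
Proof.
apply/matrixP => i z; rewrite !mxE sum_tens.
apply: eq_bigr => i' _.
rewrite (bigD1 z) //= big1 ?addr0; last first.
  move=> z' nz'; rewrite /tens_idC tensmxE mxE.
  by rewrite eq_sym (negbTE nz') mulr0 mul0r.
by rewrite /tens_idC tensmxE !mxE eqxx mulr1.
Qed.

Lemma Zm_surj (Z : 'M[C]_(a * b, c)) : exists v, Zm v = Z.
Proof.
exists (\col_l Z (mxtens_unindex l).1 (mxtens_unindex l).2).
by apply/matrixP => i z; rewrite !mxE mxtens_indexK.
Qed.


Lemma trBC_idA (U : 'M[C]_(b * c)) (v : 'cV[C]_(a * b * c)) : U \is unitarymx ->
  trBC (ketbra (idA_tens a U *m v)) = trBC (ketbra v).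
Proof.
move=> Uu; rewrite !trBC_Xm Xm_idA trC_mul mulmxA -[Xm v *m U^T *m _]mulmxA.
by rewrite (unitarymxP _) ?mulmx1 // trmx_unitary.
Qed.

Lemma ptrace_L (L : 'M[C]_(a * b)) (w : 'cV[C]_(a * b * c)) :
  @ptrace2 R (a * b) c (ketbra (tens_idC c L *m w)) =
  L *m @ptrace2 R (a * b) c (ketbra w) *m dag L.
Proof. by rewrite !ptrace_Zm Zm_tens trC_mul !mulmxA. Qed.

Lemma step (U : 'M[C]_(b * c)) (L : 'M[C]_(a * b)) (w : 'cV[C]_(a * b * c)) : U \is unitarymx ->
  trBC (ketbra (idA_tens a U *m (tens_idC c L *m w))) =
  trB (L *m @ptrace2 R (a * b) c (ketbra w) *m dag L).
Proof. by move=> Uu; rewrite trBC_idA // trBC_trB ptrace_L. Qed.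

Lemma freedomT (v w : 'cV[C]_(a * b * c)) :
  trBC (ketbra v) = trBC (ketbra w) ->
  exists U : 'M[C]_(b * c), U \is unitarymx /\ idA_tens a U *m v = w.
Proof.
rewrite !trBC_Xm => H; have [W [Wu hW]] := freedom H.
exists W^T; split; first by rewrite trmx_unitary.
by apply: Xm_inj; rewrite Xm_idA trmxK hW.
Qed.

Lemma psd_Zm (v : 'cV[C]_(a * b * c)) :
  psd (@ptrace2 R (a * b) c (ketbra v)).
Proof.
rewrite ptrace_Zm; set Z := Zm v; split.
  by rewrite /dag trC_mul trmxCK.
move=> u.
have -> : dag u *m (Z *m Z^t*) *m u = (Z^t* *m u)^t* *m (Z^t* *m u).
  by rewrite trC_mul trmxCK !mulmxA.
rewrite mxE; apply: sumr_ge0 => k _; rewrite !mxE mulrC.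
exact: mul_conjC_ge0.
Qed.

Lemma purify (P : 'M[C]_(a * b)) : (a * b <= c)%N -> psd P ->
  exists v : 'cV[C]_(a * b * c), @ptrace2 R (a * b) c (ketbra v) = P.
Proof.
move=> hc [Ph Pp]; have [M hM] := psd_sqrt Ph Pp.
have Eu : schmidt (0 : 'M[C]_(a * b, c)) \is unitarymx by apply: schmidt_unitarymx.
have [v hv] := Zm_surj (M *m schmidt (0 : 'M[C]_(a * b, c))).
exists v; rewrite ptrace_Zm hv trC_mul mulmxA -[M *m _ *m _]mulmxA.
by rewrite (unitarymxP Eu) mulmx1.
Qed.

Lemma alg_op_ext (L : 'M[C]_(a * b)) (U U' : nat -> 'M[C]_(b * c)) k :
  (forall j, (j <= k)%N -> U j = U' j) -> alg_op L U k = alg_op L U' k.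
Proof.
elim: k => [|k IH] H /=; first by rewrite H.
rewrite H // IH // => j hj; apply: H; exact: ltnW.
Qed.

Lemma alg_opS (L : 'M[C]_(a * b)) (U : nat -> 'M[C]_(b * c)) k
  (x : 'cV[C]_(a * b * c)) :
  alg_op L U k.+1 *m x = idA_tens a (U k.+1) *m (tens_idC c L *m (alg_op L U k *m x)).
Proof. by rewrite /= !mulmxA. Qed.

End Tens.
Local Open Scope complex_scope.

Theorem proposition1 (R : realType) (a b c : nat) (L : 'M[R[i]]_(a * b))
  (xi tau : 'cV[R[i]]_(a * b * c)) (T : nat) :
  (a * b <= c)%N ->
  subunitary L ->
  xi != 0 ->
  (1 <= T)%N ->
  (transformable L T xi tau <->
   exists pi : nat -> 'M[R[i]]_(a * b),
     (forall j, (j < T)%N -> psd (pi j)) /\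
     (forall j, (j.+1 < T)%N ->
        trB (pi j.+1) = trB (L *m pi j *m dag L)) /\
     trBC (ketbra xi) = trB (pi 0%N) /\
     trBC (ketbra tau) = trB (L *m pi T.-1 *m dag L)).
Proof.
move=> hc _ _ hT; split.
  move=> [U [Uu Hal]].
  exists (fun j => @ptrace2 R (a * b) c (ketbra (alg_op L U j *m xi))).
  split; first by move=> j _; apply: psd_Zm.
  split.
    move=> j hj; rewrite -trBC_trB alg_opS step //.
    by apply: Uu; apply: ltnW.
  split; first by rewrite -trBC_trB /= trBC_idA //; apply: Uu.
  case: T hT Uu Hal => // T' _ Uu Hal.
  by rewrite -Hal alg_opS step //; apply: Uu.
move=> [pi [Hpsd [Hrec [H0 HTl]]]].
have claim : forall k, (k < T)%N -> exists U : nat -> 'M[R[i]]_(b * c),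
    (forall j, (j <= k)%N -> U j \is unitarymx) /\
    @ptrace2 R (a * b) c (ketbra (alg_op L U k *m xi)) = pi k.
  elim=> [|k IH] hk.
    have [v hv] := purify hc (Hpsd 0%N hk).
    have [W [Wu hW]] : exists W : 'M[R[i]]_(b * c),
        W \is unitarymx /\ idA_tens a W *m xi = v.
      by apply: freedomT; rewrite H0 trBC_trB hv.
    by exists (fun _ => W); split => // /=; rewrite hW.
  have [U [Uu hU]] := IH (ltnW hk).
  have [v hv] := purify hc (Hpsd _ hk).
  have [W [Wu hW]] : exists W : 'M[R[i]]_(b * c),
      W \is unitarymx /\ idA_tens a W *m (tens_idC c L *m (alg_op L U k *m xi)) = v.
    by apply: freedomT; rewrite !trBC_trB hv Hrec // ptrace_L hU.
  exists (fun j => if j == k.+1 then W else U j); split.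
    move=> j hj; case: eqP => // /eqP hjk; apply: Uu.
    by move: hj; rewrite leq_eqVlt (negbTE hjk).
  rewrite alg_opS eqxx (@alg_op_ext R a b c L _ U); last first.
    by move=> j hj; case: eqP => // hjk; rewrite hjk ltnn in hj.
  by rewrite hW.
case: T hT Hpsd Hrec HTl claim => // T' _ Hpsd Hrec HTl claim.
have [U [Uu hU]] := claim T' (ltnSn _).
have [W [Wu hW]] : exists W : 'M[R[i]]_(b * c),
    W \is unitarymx /\ idA_tens a W *m (tens_idC c L *m (alg_op L U T' *m xi)) = tau.
  by apply: freedomT; rewrite HTl trBC_trB ptrace_L hU.
exists (fun j => if j == T'.+1 then W else U j); split.
  move=> j hj; case: eqP => // /eqP hjk; apply: Uu.
  by move: hj; rewrite leq_eqVlt (negbTE hjk).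
rewrite alg_opS eqxx (@alg_op_ext R a b c L _ U); last first.
  by move=> j hj; case: eqP => // hjk; rewrite hjk ltnn in hj.
by rewrite hW.
Qed.
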